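(* Let $m$ be an even integer $\ge4$ and $l\ge m/2$. For any $u_1,\ldots,u_m\in V$, $$(\pi\otimes1_V^{\otimes m-4}\otimes\pi)(1_V^{\otimes m}\otimes C^{\otimes l})|u_1u_2\cdots u_m\omega_0^l| = (\pi\otimes1_V^{\otimes m-4}\otimes\pi)\Big((2g)^lu_1\cdots u_m+\big(l-\tfrac m2\big)(-1)^l\Phi_1(u)+(-1)^l\Phi_2(u)\Big),$$ where $\Phi_1(u)=(-1)^{\frac m2-1}\mathrm{Cont}(u_2\cdots u_{m-1})\,u_m\omega_0^{\frac m2-1}u_1$ and $$\Phi_2(u)=\sum_{\substack{1\le k\le m-1\\ k\text{ odd}}}(-1)^{\frac{k-1}2}\Big(\mathrm{Cont}(u_{m-k+1}\cdots u_{m-1})\,u_m\omega_0^{\frac{k-1}2}u_1u_2\cdots u_{m-k}+\mathrm{Cont}(u_2\cdots u_k)\,u_{k+1}\cdots u_m\omega_0^{\frac{k-1}2}u_1\Big).$$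
   Context: $\mathbb{K}$ is a field of characteristic zero and $V$ a symplectic $\mathbb{K}$-vector space of dimension $2g$ with symplectic basis $a_1,\ldots,a_g,b_1,\ldots,b_g$; $\omega_0=\sum_i(a_i\otimes b_i-b_i\otimes a_i)\in V^{\otimes 2}$. $C\colon V^{\otimes2}\to\mathbb{K}$ is bilinear with $C(a_i\otimes b_j)=\delta_{ij}$, $C(b_i\otimes a_j)=-\delta_{ij}$, $C(a_i\otimes a_j)=C(b_i\otimes b_j)=0$ (so $C(\omega_0)=2g$); $Q=\ker C$ and $\pi\colon V^{\otimes2}\to Q$ is the projection along $V^{\otimes2}=Q\oplus\mathbb{K}\omega_0$. Products are taken in the tensor algebra $T(V)$. Here $|\cdot|$ is the cyclic symmetrization $|x_1\cdots x_N|=\sum_{k=0}^{N-1}\nu^k(x_1\cdots x_N)$ for $x_i\in V$, with $\nu(x_1x_2\cdots x_N)=x_2\cdots x_Nx_1$. $C^{\otimes l}$ is applied to the last $2l$ tensor factors in consecutive pairs. For $v_1,\ldots,v_{2r}\in V$, $\mathrm{Cont}(v_1\cdots v_{2r})=C(v_1\otimes v_2)\cdots C(v_{2r-1}\otimes v_{2r})$ (equal to $1$ for $r=0$). *)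

(* Defs.v *)
From mathcomp Require Import all_boot all_order all_algebra.
Set Implicit Arguments. Unset Strict Implicit. Unset Printing Implicit Defensive.
Import Order.TTheory GRing.Theory Num.Theory.
Local Open Scope ring_scope.

(* Symplectic space V = K^(2g) with basis e_0..e_(2g-1):
   e_i = a_(i+1) for i < g,  e_(g+i) = b_(i+1) for i < g. *)
Section Tensors.
Variables (K : fieldType) (g : nat).

Definition idx := 'I_(g.*2).

Definition Vec := idx -> K.

(* matrix of C on basis pairs: C(a_i b_j) = delta, C(b_i a_j) = -delta *)
Definition Cmat (i j : idx) : K :=
  if (i < g)%N && (nat_of_ord j == i + g)%N then 1
  else if (j < g)%N && (nat_of_ord i == j + g)%N then -1 else 0.

Definition Cbil (v w : Vec) : K := \sum_(i : idx) \sum_(j : idx) v i * w j * Cmat i j.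

(* Cont(v1 ... v2r) = C(v1 v2) ... C(v2r-1 v2r); (odd length never used) *)
Fixpoint Cont (s : seq Vec) : K :=
  match s with
  | [::] => 1
  | v :: w :: r => Cbil v w * Cont r
  | [:: _] => 0
  end.

Fixpoint Contw (s : seq idx) : K :=
  match s with
  | [::] => 1
  | i :: j :: r => Cmat i j * Contw r
  | [:: _] => 0
  end.

(* Elements of (the degree-wise completion of) T(V): coefficient functions on
   words in the basis indices; the word i1...iN stands for e_i1 ... e_iN. *)
Definition tensor := seq idx -> K.

Definition tadd (x y : tensor) : tensor := fun w => x w + y w.
Definition tscale (c : K) (x : tensor) : tensor := fun w => c * x w.
Definition tone : tensor := fun w => (w == [::])%:R.
Definition tmul (x y : tensor) : tensor :=
  fun w => \sum_(k < (size w).+1) x (take k w) * y (drop k w).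
Definition texp (x : tensor) (n : nat) : tensor := iter n (tmul x) tone.

Definition vtens (v : Vec) : tensor :=
  fun w => if w is [:: i] then v i else 0.

Definition vprod (s : seq Vec) : tensor := foldr (fun v acc => tmul (vtens v) acc) tone s.

(* omega_0 = sum_i (a_i b_i - b_i a_i) *)
Definition omega0 : tensor :=
  fun w => if w is [:: i; j] then Cmat i j else 0.

(* cyclic symmetrization, degreewise: |x| = sum_{k<N} nu^k x on V^{(x)N},
   nu(x1 x2 ... xN) = x2 ... xN x1; the coefficient of the word w in nu^k x
   is the coefficient of rotr k w in x. *)
Definition cyc (x : tensor) : tensor :=
  fun w => \sum_(k < size w) x (rotr k w).

(* 1_V^{(x)m} (x) C^{(x)l} : V^{(x)(m+2l)} -> V^{(x)m} *)
Definition contract (m l : nat) (x : tensor) : tensor :=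
  fun w => if size w == m then
             \sum_(u : (l.*2).-tuple idx) x (w ++ u) * Contw u
           else 0.

(* pi : V^{(x)2} -> Q = ker C, projection along K omega0:
   pi(x) = x - (C(x)/(2g)) omega0 ; applied to the first / last two factors *)
Definition piFirst (x : tensor) : tensor :=
  fun w => match w with
           | i1 :: i2 :: r =>
               x w - Cmat i1 i2 / (g.*2)%:R *
                     \sum_(a : idx) \sum_(b : idx) Cmat a b * x (a :: b :: r)
           | _ => x w
           end.

Definition piLast (x : tensor) : tensor :=
  fun w => match rev w with
           | j2 :: j1 :: r =>
               x w - Cmat j1 j2 / (g.*2)%:R *
                     \sum_(a : idx) \sum_(b : idx) Cmat a b * x (rev r ++ [:: a; b])
           | _ => x w
           end.

(* pi (x) 1_V^{(x)(m-4)} (x) pi on V^{(x)m} (m >= 4), extended by 0 off degree m *)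
Definition piPi (m : nat) (x : tensor) : tensor :=
  fun w => if size w == m then piLast (piFirst x) w else 0.

(* u_a u_(a+1) ... u_b (empty if b < a) *)
Definition useq (u : nat -> Vec) (a b : nat) : seq Vec :=
  [seq u i | i <- iota a (b.+1 - a)].

Definition lhs54 (m l : nat) (u : nat -> Vec) : tensor :=
  piPi m (contract m l (cyc (tmul (vprod (useq u 1 m)) (texp omega0 l)))).

Definition Phi1 (m : nat) (u : nat -> Vec) : tensor :=
  tscale ((-1) ^+ (m./2 - 1) * Cont (useq u 2 (m - 1)))
         (tmul (vtens (u m)) (tmul (texp omega0 (m./2 - 1)) (vtens (u 1%N)))).

Definition Phi2 (m : nat) (u : nat -> Vec) : tensor :=
  fun w => \sum_(1 <= k < m | odd k)
    ((-1) ^+ (k.-1./2) *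
     (Cont (useq u (m - k + 1) (m - 1)) *
        tmul (vtens (u m)) (tmul (texp omega0 (k.-1./2)) (vprod (useq u 1 (m - k)))) w
      + Cont (useq u 2 k) *
        tmul (vprod (useq u k.+1 m)) (tmul (texp omega0 (k.-1./2)) (vtens (u 1%N))) w)).

Definition rhs54 (m l : nat) (u : nat -> Vec) : tensor :=
  piPi m (tadd (tscale ((g.*2)%:R ^+ l) (vprod (useq u 1 m)))
         (tadd (tscale ((l%:R - (m./2)%:R) * (-1) ^+ l) (Phi1 m u))
               (tscale ((-1) ^+ l) (Phi2 m u)))).
End Tensors.

(* Main.v *)
Require Import Defs.
From mathcomp Require Import all_boot all_order all_algebra.
From mathcomp Require Import zify ring.
From Stdlib Require Import FunctionalExtensionality.
Set Implicit Arguments. Unset Strict Implicit. Unset Printing Implicit Defensive.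
Import Order.TTheory GRing.Theory Num.Theory.
Local Open Scope ring_scope.

Section Work.
Variables (K : fieldType) (g : nat).
Local Notation idx := (idx g).
Local Notation Vec := (Vec K g).
Local Notation tensor := (tensor K g).
Local Notation CM := (@Cmat K g).
Local Notation CW := (@Contw K g).
Local Notation D := ((g.*2)%:R : K).

Fixpoint sumw (n : nat) (F : seq idx -> K) : K :=
  match n with 0 => F [::] | n'.+1 => \sum_(i : idx) sumw n' (fun s => F (i :: s)) end.

Lemma sumw_S n F : sumw n.+1 F = \sum_(i : idx) sumw n (fun s => F (i :: s)).
Proof. by []. Qed.

Lemma sumw_ext n F G : (forall s, size s = n -> F s = G s) -> sumw n F = sumw n G.
Proof.
elim: n F G => [|n IH] F G H /=; first by apply: H.
apply: eq_bigr => i _; apply: IH => s hs; apply: H; by rewrite /= hs.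
Qed.

Lemma sumw_cat a b F : sumw (a + b) F = sumw a (fun s => sumw b (fun t => F (s ++ t))).
Proof.
elim: a F => [|a IH] F //=.
by apply: eq_bigr => i _; rewrite IH.
Qed.

Lemma sumw_mull n c F : sumw n (fun s => c * F s) = c * sumw n F.
Proof.
elim: n F => [|n IH] F //=.
rewrite mulr_sumr; apply: eq_bigr => i _; by rewrite IH.
Qed.

Lemma sumw_mulr n c F : sumw n (fun s => F s * c) = sumw n F * c.
Proof.
rewrite -[RHS]mulrC -sumw_mull; apply: sumw_ext => s _; by rewrite mulrC.
Qed.

Lemma sumw_add n F G : sumw n (fun s => F s + G s) = sumw n F + sumw n G.
Proof.
elim: n F G => [|n IH] F G //=.
rewrite -big_split; apply: eq_bigr => i _; by rewrite IH.
Qed.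

Lemma sumw_big n (J : Type) (r : seq J) (P : pred J) (F : J -> seq idx -> K) :
  sumw n (fun s => \sum_(j <- r | P j) F j s) = \sum_(j <- r | P j) sumw n (F j).
Proof.
elim: n F => [|n IH] F //=.
rewrite exchange_big; apply: eq_bigr => i _; by rewrite IH.
Qed.

Lemma sumw_tuple n (F : seq idx -> K) :
  \sum_(t : n.-tuple idx) F t = sumw n F.
Proof.
elim: n F => [|n IH] F /=.
  rewrite (big_pred1 [tuple]) //= => t; by rewrite [t]tuple0; apply/esym/eqP.
rewrite -[RHS](eq_bigr _ (fun i _ => IH (fun s => F (i :: s)))).
rewrite pair_big /=.
rewrite (reindex (fun p : idx * n.-tuple idx => [tuple of p.1 :: p.2])) /=; last first.
  exists (fun t : n.+1.-tuple idx => (thead t, behead_tuple t)).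
    by move=> [i t] _ /=; congr pair; apply: val_inj.
  move=> t _; apply: val_inj => /=; by case: t => [[|a s] //= _].
by apply: eq_bigr => -[i t] _.
Qed.


Lemma ltn_idx (i : idx) : (i < g + g)%N.
Proof. by rewrite addnn ltn_ord. Qed.

Definition pn (i : idx) : nat := if (i < g)%N then (i + g)%N else (i - g)%N.
Lemma pn_lt (i : idx) : (pn i < g.*2)%N.
Proof. suff: (pn i < g + g)%N by rewrite addnn.
have h : (i < g + g)%N by rewrite addnn ltn_ord.
rewrite /pn; case: ifP; lia. Qed.
Definition pt (i : idx) : idx := Ordinal (pn_lt i).
Definition sgn (i : idx) : K := if (i < g)%N then 1 else -1.

Lemma CM_E (i j : idx) : CM i j = sgn i * (j == pt i)%:R.
Proof.
rewrite /Cmat /sgn.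
have hi := ltn_idx i; have hj := ltn_idx j.
have -> : (j == pt i) = (nat_of_ord j == pn i) by [].
rewrite /pn; case: (ltnP i g) => hi' /=.
  case: eqP => E /=; first by rewrite mulr1.
  rewrite mulr0; case: ifP => // /andP [_ /eqP]; lia.
case E: (nat_of_ord j == i - g)%N.
  rewrite ifT ?mulr1 //; move/eqP: E => E; apply/andP; split; [|apply/eqP]; lia.
rewrite ifF ?mulr0 //; apply/negbTE/nandP; right; apply/eqP => E2; move/eqP: E; lia.
Qed.

Lemma sum_delta (x : idx) (F : idx -> K) : \sum_(b : idx) (b == x)%:R * F b = F x.
Proof.
rewrite (bigD1 x) //= eqxx mul1r big1 ?addr0 // => b /negbTE ->; by rewrite mul0r.
Qed.

Lemma sum_delta' (x : idx) (F : idx -> K) : \sum_(b : idx) (x == b)%:R * F b = F x.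
Proof. rewrite -[RHS]sum_delta; apply: eq_bigr => b _; by rewrite eq_sym. Qed.

Lemma CM_row (i : idx) (F : idx -> K) : \sum_j CM i j * F j = sgn i * F (pt i).
Proof.
rewrite -(sum_delta (pt i) F) mulr_sumr; apply: eq_bigr => j _; by rewrite CM_E mulrA.
Qed.

Lemma sgn_pt (i : idx) : sgn (pt i) = - sgn i.
Proof.
rewrite /sgn /pt /pn /=; have := ltn_idx i.
case: (ltnP i g) => hi h; [rewrite ifF ?opprK //| rewrite ifT ?opprK //]; try (apply/negbTE; rewrite -leqNgt); lia.
Qed.

Lemma pt_pt (i : idx) : pt (pt i) = i.
Proof.
apply: val_inj; rewrite /pt /pn /=; have := ltn_idx i.
case: (ltnP i g) => hi h; [rewrite ifF | rewrite ifT]; try (apply/negbTE; rewrite -leqNgt); lia.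
Qed.

Lemma sgn_sq (i : idx) : sgn i * sgn i = 1.
Proof. rewrite /sgn; case: ifP => _; by rewrite ?mulr1 ?mulrNN ?mulr1. Qed.

Lemma CM_anti (i j : idx) : CM j i = - CM i j.
Proof.
rewrite !CM_E.
have [->|ne] := eqVneq j (pt i).
  by rewrite pt_pt eqxx sgn_pt !mulr1.
have -> : (i == pt j) = false.
  apply/negbTE; apply: contra ne => /eqP ->; by rewrite pt_pt.
by rewrite !mulr0 oppr0.
Qed.

Lemma JJ (a c : idx) : \sum_b CM a b * CM b c = - (a == c)%:R.
Proof.
rewrite CM_row CM_E sgn_pt mulrA mulrN sgn_sq mulN1r.
by rewrite pt_pt eq_sym.
Qed.

Lemma Sq : \sum_(a : idx) \sum_(b : idx) CM a b * CM a b = D.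
Proof.
rewrite (eq_bigr (fun _ => 1)); last first.
  move=> a _; rewrite (eq_bigr (fun b => - (CM a b * CM b a))).
    by rewrite sumrN JJ eqxx opprK.
  move=> b _; by rewrite [CM b a]CM_anti mulrN opprK.
by rewrite sumr_const card_ord.
Qed.

Lemma Contw_cat n (s t : seq idx) : size s = n.*2 -> CW (s ++ t) = CW s * CW t.
Proof.
elim: n s => [|n IH] [|a [|b s]] //= hs; first by rewrite mul1r.
rewrite doubleS in hs; case: hs => hs.
by rewrite (IH s) // mulrA.
Qed.

Lemma chain n (x y : idx) :
  sumw (n.*2.+1) (fun v => CW (x :: v) * CW (v ++ [:: y])) = (-1) ^+ n.+1 * (x == y)%:R.
Proof.
elim: n x y => [|n IH] x y.
  rewrite /= (eq_bigr (fun i => CM x i * CM i y)); last by move=> i _; rewrite !mulr1.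
  by rewrite JJ expr1 mulN1r.
rewrite doubleS sumw_S (eq_bigr _ (fun a _ => sumw_S _ _)).
rewrite (eq_bigr (fun a => \sum_b CM x a * CM a b * sumw (n.*2.+1) (fun v => CW (b :: v) * CW (v ++ [:: y])))); last first.
  move=> a _; apply: eq_bigr => b _; rewrite -sumw_mull; apply: sumw_ext => s _ /=.
  by ring.
rewrite exchange_big.
rewrite (eq_bigr (fun b => - (x == b)%:R * ((-1) ^+ n.+1 * (b == y)%:R))); last first.
  move=> b _; by rewrite -mulr_suml JJ IH.
rewrite (eq_bigr (fun b => (x == b)%:R * (- ((-1) ^+ n.+1 * (b == y)%:R)))); last first.
  by move=> b _; rewrite mulNr mulrN.
by rewrite sum_delta' [in RHS]exprS mulN1r mulNr.
Qed.

Lemma Contw_sq n : sumw (n.*2) (fun v => CW v * CW v) = D ^+ n.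
Proof.
elim: n => [|n IH]; first by rewrite /= mulr1.
rewrite doubleS sumw_S (eq_bigr _ (fun a _ => sumw_S _ _)) exprS -{1}Sq mulr_suml; apply: eq_bigr => a _.
rewrite mulr_suml; apply: eq_bigr => b _; rewrite -IH -sumw_mull.
apply: sumw_ext => s _ /=; ring.
Qed.

Fixpoint Uw (us : seq Vec) (z : seq idx) : K :=
  match us, z with
  | [::], [::] => 1
  | v :: us', i :: z' => v i * Uw us' z'
  | _, _ => 0
  end.

Lemma Uw_cat us1 us2 z1 z2 : size z1 = size us1 ->
  Uw (us1 ++ us2) (z1 ++ z2) = Uw us1 z1 * Uw us2 z2.
Proof.
elim: us1 z1 => [|v us IH] [|i z] //=; first by rewrite mul1r.
by case => hs; rewrite IH // mulrA.
Qed.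

Lemma Uw_size us z : size z <> size us -> Uw us z = 0.
Proof.
elim: us z => [|v us IH] [|i z] //= h; rewrite IH ?mulr0 //; by move=> e; apply: h; rewrite e.
Qed.

Lemma Cont_sum us : sumw (size us) (fun v => CW v * Uw us v) = @Cont K g us.
Proof.
suff: forall n us, (size us <= n)%N -> sumw (size us) (fun v => CW v * Uw us v) = @Cont K g us.
  by move=> H; apply: (H (size us)).
elim=> [|n IH] [|v [|w r]] //=; try by rewrite mulr1.
- move=> _; apply: big1 => i _; by rewrite mul0r.
move=> hs.
rewrite /Cbil mulr_suml; apply: eq_bigr => a _.
rewrite mulr_suml; apply: eq_bigr => b _.
rewrite -(IH r); last by move: hs => /=; lia.
rewrite -sumw_mull; apply: sumw_ext => s _ /=.
ring.
Qed.


Lemma sumw1 F : sumw 1 F = \sum_(x : idx) F [:: x].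
Proof. by []. Qed.

Lemma split_x a b (H : seq idx -> K) :
  sumw (a + (1 + b)) H = sumw a (fun v1 => \sum_(x : idx) sumw b (fun v2 => H (v1 ++ x :: v2))).
Proof. rewrite sumw_cat; apply: sumw_ext => v1 _; by rewrite sumw_cat sumw1. Qed.

Lemma S1 a b (H : seq idx -> K) F G :
  (forall v1 x v2, size v1 = a -> size v2 = b -> H (v1 ++ x :: v2) = F v1 * G x v2) ->
  sumw (a + (1 + b)) H = sumw a F * \sum_(x : idx) sumw b (G x).
Proof.
move=> E; rewrite split_x -sumw_mulr; apply: sumw_ext => v1 h1.
rewrite mulr_sumr; apply: eq_bigr => x _; rewrite -sumw_mull; apply: sumw_ext => v2 h2.
by rewrite E.
Qed.

Lemma S2 a b (H : seq idx -> K) F G :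
  (forall v1 x v2, size v1 = a -> size v2 = b -> H (v1 ++ x :: v2) = F v1 x * G v2) ->
  sumw (a + (1 + b)) H = (\sum_(x : idx) sumw a (fun v1 => F v1 x)) * sumw b G.
Proof.
move=> E; rewrite split_x -sumw_big -sumw_mulr; apply: sumw_ext => v1 h1.
rewrite mulr_suml; apply: eq_bigr => x _; rewrite -sumw_mull; apply: sumw_ext => v2 h2.
by rewrite E.
Qed.

Lemma S3 a b c (H : seq idx -> K) F G Hh :
  (forall v1 x v2 z v3, size v1 = a -> size v2 = b -> size v3 = c ->
      H (v1 ++ x :: v2 ++ z :: v3) = F v1 x * G v2 * Hh z v3) ->
  sumw (a + (1 + (b + (1 + c)))) H =
   (\sum_(x : idx) sumw a (fun v1 => F v1 x)) * sumw b G * \sum_(z : idx) sumw c (Hh z).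
Proof.
move=> E; rewrite split_x -sumw_big -mulrA -sumw_mulr; apply: sumw_ext => v1 h1.
rewrite mulr_suml; apply: eq_bigr => x _.
rewrite (@S1 b c _ (fun v2 => F v1 x * G v2) Hh); first by rewrite sumw_mull mulrA.
move=> v2 z v3 h2 h3; by rewrite E.
Qed.

Lemma tmul_hom a (x y : tensor) z : (forall s, size s <> a -> x s = 0) ->
  tmul x y z = if (a <= size z)%N then x (take a z) * y (drop a z) else 0.
Proof.
move=> hx; rewrite /tmul.
case: (leqP a (size z)) => ha.
  have ha' : (a < (size z).+1)%N by rewrite ltnS.
  rewrite (bigD1 (Ordinal ha')) //=.
  rewrite big1 ?addr0 // => k /eqP nk; rewrite hx ?mul0r // size_take.
  move=> e; apply: nk; apply: val_inj => /=; move: e; have := ltn_ord k; case: ifP; lia.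
apply: big1 => k _; rewrite hx ?mul0r // size_take; have := ltn_ord k; case: ifP; lia.
Qed.

Lemma tmul_cat a (x y : tensor) s t : (forall s, size s <> a -> x s = 0) -> size s = a ->
  tmul x y (s ++ t) = x s * y t.
Proof.
move=> hx hs; rewrite (tmul_hom _ _ hx) size_cat ifT; last by lia.
by rewrite take_size_cat // drop_size_cat.
Qed.

Lemma vtens_supp (v : Vec) s : size s <> 1%N -> @vtens K g v s = 0.
Proof. by case: s => [|i [|j s]]. Qed.

Lemma vprod_E us z : @vprod K g us z = Uw us z.
Proof.
elim: us z => [|v us IH] z /=.
  by rewrite /tone; case: z.
case: z => [|i z].
  rewrite (tmul_hom _ _ (@vtens_supp v)) /=; by [].
rewrite -cat1s (tmul_cat _ _ (@vtens_supp v)) //= IH; by [].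
Qed.

Lemma vprod_supp us s : size s <> size us -> @vprod K g us s = 0.
Proof. move=> h; by rewrite vprod_E Uw_size. Qed.

Lemma omega_supp s : size s <> 2%N -> @omega0 K g s = 0.
Proof. by case: s => [|i [|j [|k s]]]. Qed.

Lemma texp_E n z : @texp K g (@omega0 K g) n z = (size z == n.*2)%:R * CW z.
Proof.
elim: n z => [|n IH] z.
  by rewrite /texp /= /tone; case: z => [|i z] /=; rewrite ?mul1r ?mul0r.
rewrite /texp iterS -/(texp _ n) (tmul_hom _ _ omega_supp).
case: z => [|i [|j z]] /=; rewrite ?mul0r //.
rewrite IH doubleS eqSS take0 drop0 eqSS; ring.
Qed.

Lemma texp_supp n s : size s <> n.*2 -> @texp K g (@omega0 K g) n s = 0.
Proof. by move=> h; rewrite texp_E; move/eqP/negbTE: h => ->; rewrite mul0r. Qed.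

Lemma Uw1 (v : Vec) i : Uw [:: v] [:: i] = v i.
Proof. by rewrite /= mulr1. Qed.


Lemma chainA n (y : idx) (f : idx -> K) :
  \sum_(x : idx) f x * sumw (n.*2.+1) (fun v => CW (x :: v) * CW (v ++ [:: y])) = (-1) ^+ n.+1 * f y.
Proof.
rewrite (eq_bigr (fun x => (x == y)%:R * ((-1) ^+ n.+1 * f x))); first by rewrite sum_delta.
move=> x _; rewrite chain; ring.
Qed.

Lemma chainB n (y : idx) (f : idx -> K) :
  \sum_(x : idx) sumw (n.*2.+1) (fun v => CW (y :: v) * CW (v ++ [:: x]) * f x) = (-1) ^+ n.+1 * f y.
Proof.
rewrite (eq_bigr (fun x => (y == x)%:R * ((-1) ^+ n.+1 * f x))); first by rewrite sum_delta'.
move=> x _; rewrite sumw_mulr chain; ring.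
Qed.

Lemma sgnD i l : (i <= l)%N -> (-1) ^+ (l - i) = (-1) ^+ l * (-1) ^+ i :> K.
Proof.
move=> h; rewrite -{2}(subnK h) exprD -mulrA -exprMn mulrNN mulr1 expr1n; by rewrite mulr1.
Qed.

Lemma size_useq (u : nat -> Vec) a b : size (useq u a b) = (b.+1 - a)%N.
Proof. by rewrite /useq size_map size_iota. Qed.

Lemma useq_cat (u : nat -> Vec) a b c : (a <= b.+1)%N -> (b <= c)%N ->
  useq u a c = useq u a b ++ useq u b.+1 c.
Proof.
move=> h1 h2; rewrite /useq -map_cat; congr map.
have -> : iota b.+1 (c.+1 - b.+1) = iota (a + (b.+1 - a)) (c.+1 - b.+1) by congr iota; lia.
rewrite -iotaD; congr iota; lia.
Qed.

Lemma useq1 (u : nat -> Vec) a : useq u a a = [:: u a].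
Proof. by rewrite /useq subSnn. Qed.

Lemma dec2 (w : seq idx) n : (n <= size w)%N -> exists w1 w2, w = w1 ++ w2 /\ size w1 = n.
Proof. move=> h; exists (take n w), (drop n w); by rewrite cat_take_drop size_takel. Qed.

Lemma dec_cons (w : seq idx) : (0 < size w)%N -> exists a w', w = a :: w'.
Proof. case: w => // a w' _; by exists a, w'. Qed.

Lemma dec_rcons (w : seq idx) : (0 < size w)%N -> exists w' y, w = w' ++ [:: y].
Proof. case/lastP: w => // w' y _; exists w', y; by rewrite cats1. Qed.

Definition Xf (m : nat) (u : nat -> Vec) (z : seq idx) : K :=
  Uw (useq u 1 m) (take m z) * CW (drop m z).

Lemma Xf_cat m u s t : size s = m -> Xf m u (s ++ t) = Uw (useq u 1 m) s * CW t.
Proof. move=> h; by rewrite /Xf take_size_cat // drop_size_cat. Qed.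

Definition T (m l : nat) (u : nat -> Vec) (p : nat) (w : seq idx) : K :=
  sumw (l.*2) (fun v => CW v * Xf m u (rot p (w ++ v))).

Lemma TAl m l u i w : (i.*2.+1 < m)%N -> (i < l)%N -> size w = m ->
  T m l u (i.*2.+1) w = (-1) ^+ l * (-1) ^+ i * @Cont K g (useq u (m - i.*2.+1 + 1) (m - 1)) *
     tmul (@vtens K g (u m)) (tmul (@texp K g (@omega0 K g) i) (@vprod K g (useq u 1 (m - i.*2.+1)))) w.
Proof.
move=> hk hi hw.
have hw' : (i.*2.+1 <= size w)%N by rewrite hw ltnW.
have [wa [w2 [Ew ha]]] := dec2 hw'.
have ha' : (0 < size wa)%N by rewrite ha.
have [w0 [w1 Ea]] := dec_cons ha'.
subst w wa; move: ha => /= [h1].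
have h2 : size w2 = (m - i.*2.+1)%N by move: hw; rewrite size_cat /= h1; lia.
rewrite -[w0 :: w1 ++ w2]/([:: w0] ++ (w1 ++ w2)).
rewrite (tmul_cat _ _ (@vtens_supp _)) // (tmul_cat _ _ (@texp_supp i)) // texp_E vprod_E.
rewrite h1 eqxx mul1r /vtens.
rewrite /T.
have -> : l.*2 = (i.*2 + (1 + (l - i - 1).*2.+1))%N by rewrite -!addnn; lia.
set us1 := useq u 1 (m - i.*2.+1).
set us2 := useq u (m - i.*2.+1 + 1) (m - 1).
rewrite (@S1 _ _ _ (fun v1 => CW v1 * Uw us2 v1 * (CW w1 * Uw us1 w2))
   (fun x v2 => u m x * (CW (x :: v2) * CW (v2 ++ [:: w0])))); last first.
  move=> v1 x v2 s1 s2.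
  have -> : rot i.*2.+1 (([:: w0] ++ w1 ++ w2) ++ v1 ++ x :: v2) =
            (w2 ++ v1 ++ [:: x]) ++ ((v2 ++ [:: w0]) ++ w1).
    rewrite (_ : ([:: w0] ++ w1 ++ w2) ++ v1 ++ x :: v2 = (w0 :: w1) ++ (w2 ++ v1 ++ x :: v2)); last by rewrite /= -!catA.
    have -> : i.*2.+1 = size (w0 :: w1) by rewrite /= h1.
    rewrite rot_size_cat; by rewrite /= -?catA /= -?catA.
  rewrite Xf_cat; last by rewrite !size_cat h2 s1 /=; lia.
  have -> : useq u 1 m = us1 ++ (us2 ++ [:: u m]).
    rewrite (@useq_cat u 1 (m-1) m); [|lia|lia].
    have -> : (m - 1).+1 = m by lia.
    rewrite useq1 (@useq_cat u 1 (m - i.*2.+1) (m-1)); [|lia|lia].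
    by rewrite /us1 /us2 addn1 catA.
  rewrite Uw_cat; last by rewrite /us1 size_useq h2; lia.
  rewrite Uw_cat; last by rewrite /us2 size_useq s1; lia.
  rewrite Uw1 (@Contw_cat (l - i) (v2 ++ [:: w0]) w1); last by rewrite size_cat s2 /= -!addnn; lia.
  rewrite (@Contw_cat i v1) //; ring.
rewrite sumw_mulr.
have -> : sumw i.*2 (fun v1 => CW v1 * Uw us2 v1) = @Cont K g us2.
  by rewrite -Cont_sum /us2 size_useq; congr sumw; lia.
rewrite (eq_bigr (fun x => u m x * sumw (l - i - 1).*2.+1 (fun v => CW (x :: v) * CW (v ++ [:: w0])))); last first.
  by move=> x _; rewrite sumw_mull.
rewrite chainA.
have -> : ((l - i - 1).+1 = l - i)%N by lia.
rewrite sgnD; last by lia.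
ring.
Qed.


Lemma TBe m l u i w : (i.*2.+1 < m)%N -> (i < l)%N -> size w = m ->
  T m l u (m + (l.*2 - i.*2.+1)) w = (-1) ^+ l * (-1) ^+ i * @Cont K g (useq u 2 i.*2.+1) *
     tmul (@vprod K g (useq u i.*2.+2 m)) (tmul (@texp K g (@omega0 K g) i) (@vtens K g (u 1%N))) w.
Proof.
move=> hk hi hw.
have hw' : (m - i.*2.+1 <= size w)%N by rewrite hw leq_subr.
have [w1 [wr [Ew h1]]] := dec2 hw'.
have hr : size wr = i.*2.+1 by move: hw; rewrite Ew size_cat h1; lia.
have hr' : (0 < size wr)%N by rewrite hr.
have [w2 [y Er]] := dec_rcons hr'.
subst w wr; move: hr; rewrite size_cat /= addn1 => -[h2].
set us2 := useq u 2 i.*2.+1.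
set us3 := useq u i.*2.+2 m.
have sup3 : forall s, size s <> (m - i.*2.+1)%N -> @vprod K g us3 s = 0.
  by move=> s hs; apply: vprod_supp; rewrite /us3 size_useq; lia.
rewrite (tmul_cat _ _ sup3) // (tmul_cat _ _ (@texp_supp i)) // texp_E vprod_E h2 eqxx mul1r /vtens.
set p := (m + (l.*2 - i.*2.+1))%N.
have hp : p = (m + (l - i - 1).*2.+1)%N by rewrite /p -!addnn; lia.
rewrite /T.
have -> : l.*2 = ((l - i - 1).*2.+1 + (1 + i.*2))%N by rewrite -!addnn; lia.
rewrite (@S2 _ _ _ (fun v1 x => CW (y :: v1) * CW (v1 ++ [:: x]) * u 1%N x)
   (fun v2 => CW v2 * Uw us2 v2 * (Uw us3 w1 * CW w2))); last first.
  move=> v1 x v2 s1 s2.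
  have -> : rot p ((w1 ++ w2 ++ [:: y]) ++ v1 ++ x :: v2) =
            (x :: v2 ++ w1) ++ (w2 ++ y :: v1).
    rewrite (_ : (w1 ++ w2 ++ [:: y]) ++ v1 ++ x :: v2 = ((w1 ++ w2 ++ [:: y]) ++ v1) ++ (x :: v2)); last by rewrite -!catA.
    have -> : p = size ((w1 ++ w2 ++ [:: y]) ++ v1).
      rewrite hp !size_cat h1 h2 s1 /= -!addnn; lia.
    rewrite rot_size_cat; by rewrite /= -?catA /= -?catA.
  rewrite Xf_cat; last by rewrite /= size_cat s2 h1; lia.
  have -> : useq u 1 m = u 1%N :: (us2 ++ us3).
    rewrite (@useq_cat u 1 1 m); [|lia|lia].
    rewrite useq1 (@useq_cat u 2 i.*2.+1 m); [by [] |lia|lia].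
  rewrite [Uw _ _]/= Uw_cat; last by rewrite /us2 size_useq s2; lia.
  rewrite (@Contw_cat i w2) // (_ : v1 ++ x :: v2 = (v1 ++ [:: x]) ++ v2); last by rewrite -catA.
  rewrite (@Contw_cat (l - i) (v1 ++ [:: x]) v2); last by rewrite size_cat s1 /= -!addnn; lia.
  ring.
have -> : sumw i.*2 (fun v2 => CW v2 * Uw us2 v2 * (Uw us3 w1 * CW w2)) = @Cont K g us2 * (Uw us3 w1 * CW w2).
  by rewrite sumw_mulr -Cont_sum /us2 size_useq; congr (sumw _ _ * _); lia.
rewrite chainB.
have -> : ((l - i - 1).+1 = l - i)%N by lia.
rewrite sgnD; last by lia.
ring.
Qed.


Lemma sgn2 k : (-1) ^+ (k.*2) = 1 :> K.
Proof. by rewrite -addnn exprD -exprMn mulrNN mulr1 expr1n. Qed.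

Lemma TPhi m l u i w h : m = h.*2 -> (2 <= h)%N -> (i + h < l)%N -> size w = m ->
  T m l u (m + i.*2.+1) w = (-1) ^+ l * (-1) ^+ (h - 1) * @Cont K g (useq u 2 (m - 1)) *
     tmul (@vtens K g (u m)) (tmul (@texp K g (@omega0 K g) (h - 1)) (@vtens K g (u 1%N))) w.
Proof.
move=> hm hh hi hw.
have hw0 : (0 < size w)%N by rewrite hw hm -addnn; lia.
have [w0 [wr Ew]] := dec_cons hw0.
have hr : (0 < size wr)%N by move: hw; rewrite Ew /= hm -addnn; lia.
have [w1 [y Er]] := dec_rcons hr.
subst w wr; move: hw; rewrite /= size_cat /= addn1 => h0.
have h1 : size w1 = (m - 2)%N by lia.
have h1' : size w1 = (h - 1).*2 by rewrite h1 hm -!addnn; lia.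
rewrite -[w0 :: w1 ++ [:: y]]/([:: w0] ++ (w1 ++ [:: y])).
rewrite (tmul_cat _ _ (@vtens_supp _)) // (tmul_cat _ _ (@texp_supp (h - 1))) // texp_E h1' eqxx mul1r /vtens.
set us2 := useq u 2 (m - 1).
set p := (m + i.*2.+1)%N.
rewrite /T.
set n3 := (l - i - h - 1)%N.
have -> : l.*2 = (i.*2.+1 + (1 + ((h - 1).*2 + (1 + n3.*2.+1))))%N by rewrite /n3 -!addnn; lia.
rewrite (@S3 _ _ _ _ (fun v1 x => CW (y :: v1) * CW (v1 ++ [:: x]) * u 1%N x)
   (fun v2 => CW v2 * Uw us2 v2 * CW w1)
   (fun z v3 => u m z * (CW (z :: v3) * CW (v3 ++ [:: w0])))); last first.
  move=> v1 x v2 z v3 s1 s2 s3.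
  have -> : rot p (([:: w0] ++ w1 ++ [:: y]) ++ v1 ++ x :: v2 ++ z :: v3) =
            (x :: v2 ++ [:: z]) ++ ((v3 ++ [:: w0]) ++ (w1 ++ y :: v1)).
    rewrite (_ : ([:: w0] ++ w1 ++ [:: y]) ++ v1 ++ x :: v2 ++ z :: v3 =
       (([:: w0] ++ w1 ++ [:: y]) ++ v1) ++ (x :: v2 ++ z :: v3)); last by rewrite -!catA.
    have -> : p = size (([:: w0] ++ w1 ++ [:: y]) ++ v1).
      rewrite /p !size_cat h1 s1 /= hm -!addnn; lia.
    rewrite rot_size_cat; by rewrite /= -?catA /= -?catA.
  rewrite Xf_cat; last by rewrite /= size_cat s2 /= hm -!addnn; lia.
  have -> : useq u 1 m = u 1%N :: (us2 ++ [:: u m]).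
    rewrite (@useq_cat u 1 1 m); [|lia|lia].
    rewrite useq1 (@useq_cat u 2 (m - 1) m); [|lia|lia].
    have -> : (m - 1).+1 = m by lia.
    by rewrite useq1.
  rewrite [Uw (_ :: _) _]/= Uw_cat; last by rewrite /us2 size_useq s2 hm -!addnn; lia.
  rewrite Uw1 (@Contw_cat n3.+1 (v3 ++ [:: w0])); last by rewrite size_cat s3 /= -!addnn; lia.
  rewrite (@Contw_cat (h - 1) w1) //.
  rewrite (_ : v1 ++ x :: v2 ++ z :: v3 = (v1 ++ [:: x]) ++ (v2 ++ z :: v3)); last by rewrite -catA.
  rewrite (@Contw_cat i.+1 (v1 ++ [:: x])); last by rewrite size_cat s1 /= -!addnn; lia.
  rewrite (@Contw_cat (h - 1) v2) //.
  ring.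
have -> : sumw (h - 1).*2 (fun v2 => CW v2 * Uw us2 v2 * CW w1) = @Cont K g us2 * CW w1.
  by rewrite sumw_mulr -Cont_sum /us2 size_useq; congr (sumw _ _ * _); rewrite hm -!addnn; lia.
rewrite chainB.
rewrite (eq_bigr (fun z => u m z * sumw n3.*2.+1 (fun v => CW (z :: v) * CW (v ++ [:: w0])))); last first.
  by move=> z _; rewrite sumw_mull.
rewrite chainA.
have -> : (-1) ^+ l * (-1) ^+ (h - 1) = (-1) ^+ i.+1 * (-1) ^+ n3.+1 :> K.
  rewrite -!exprD (_ : (l + (h - 1) = (i.+1 + n3.+1) + (h - 1).*2)%N); last by rewrite /n3 -!addnn; lia.
  by rewrite exprD sgn2 mulr1.
ring.
Qed.


Definition killF (m : nat) (x : tensor) := exists G : seq idx -> K,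
  forall i1 i2 r, size r = (m - 2)%N -> x (i1 :: i2 :: r) = CM i1 i2 * G r.
Definition killL (m : nat) (x : tensor) := exists G : seq idx -> K,
  forall s j1 j2, size s = (m - 2)%N -> x (s ++ [:: j1; j2]) = G s * CM j1 j2.

Lemma killF_sum m (I : eqType) (r : seq I) (P : pred I) (F : I -> tensor) :
  (forall i, i \in r -> P i -> killF m (F i)) -> killF m (fun w => \sum_(i <- r | P i) F i w).
Proof.
elim: r => [|j r IH] H.
  exists (fun _ => 0) => i1 i2 r _; by rewrite big_nil mulr0.
have [G HG] : killF m (fun w => \sum_(i <- r | P i) F i w).
  by apply: IH => i hi; apply: H; rewrite inE hi orbT.
case Pj: (P j).
  have [Gj Hj] := H j (mem_head _ _) Pj.
  exists (fun s => Gj s + G s) => i1 i2 s hs.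
  by rewrite big_cons Pj HG // Hj // mulrDr.
exists G => i1 i2 s hs; by rewrite big_cons Pj HG.
Qed.

Lemma killL_sum m (I : eqType) (r : seq I) (P : pred I) (F : I -> tensor) :
  (forall i, i \in r -> P i -> killL m (F i)) -> killL m (fun w => \sum_(i <- r | P i) F i w).
Proof.
elim: r => [|j r IH] H.
  exists (fun _ => 0) => i1 i2 r _; by rewrite big_nil mul0r.
have [G HG] : killL m (fun w => \sum_(i <- r | P i) F i w).
  by apply: IH => i hi; apply: H; rewrite inE hi orbT.
case Pj: (P j).
  have [Gj Hj] := H j (mem_head _ _) Pj.
  exists (fun s => Gj s + G s) => i1 i2 s hs.
  by rewrite big_cons Pj HG // Hj // mulrDl.
exists G => i1 i2 s hs; by rewrite big_cons Pj HG.
Qed.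

Lemma killF_add m x y : killF m x -> killF m y -> killF m (fun w => x w + y w).
Proof.
move=> [G1 H1] [G2 H2]; exists (fun r => G1 r + G2 r) => i1 i2 r hr.
by rewrite H1 // H2 // mulrDr.
Qed.

Lemma piLast_E (y : tensor) s j1 j2 :
  @piLast K g y (s ++ [:: j1; j2]) =
  y (s ++ [:: j1; j2]) - CM j1 j2 / D * \sum_(a : idx) \sum_(b : idx) CM a b * y (s ++ [:: a; b]).
Proof. by rewrite /piLast rev_cat /= revK. Qed.

Lemma piFirst_E (x : tensor) i1 i2 r :
  @piFirst K g x (i1 :: i2 :: r) =
  x (i1 :: i2 :: r) - CM i1 i2 / D * \sum_(a : idx) \sum_(b : idx) CM a b * x (a :: b :: r).
Proof. by []. Qed.

Lemma sum_CM2 (c : K) : \sum_(a : idx) \sum_(b : idx) CM a b * (CM a b * c) = D * c.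
Proof.
rewrite -Sq mulr_suml; apply: eq_bigr => a _; rewrite mulr_suml; apply: eq_bigr => b _.
by rewrite mulrA.
Qed.

Lemma sum_CM2' (c : K) : \sum_(a : idx) \sum_(b : idx) CM a b * (c * CM a b) = D * c.
Proof.
rewrite -sum_CM2; apply: eq_bigr => a _; apply: eq_bigr => b _; by rewrite [c * _]mulrC.
Qed.

Lemma dec_w (w : seq idx) m : (4 <= m)%N -> size w = m ->
  exists i1 i2 s j1 j2, w = i1 :: i2 :: s ++ [:: j1; j2] /\ size s = (m - 4)%N.
Proof.
move=> hm hw.
have h : (m - 2 <= size w)%N by rewrite hw leq_subr.
have [w1 [t [Ew h1]]] := dec2 h.
have ht : size t = 2%N by move: hw; rewrite Ew size_cat h1; lia.
have h1' : (0 < size w1)%N by rewrite h1; lia.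
have [i1 [w2 E1]] := dec_cons h1'.
have h2' : (0 < size w2)%N by move: h1; rewrite E1 /=; lia.
have [i2 [s E2]] := dec_cons h2'.
subst w w1 w2.
clear h hw; case: t ht => [|j1 [|j2 [|? ?]]] // _.
exists i1, i2, s, j1, j2; split => //; move: h1 => /= h1; lia.
Qed.

Lemma piPi_killF m x : (idx -> D != 0) -> (4 <= m)%N -> killF m x -> forall w, @piPi K g m x w = 0.
Proof.
move=> hD' hm [G HG] w; rewrite /piPi; case: eqP => // hw.
have [i1 [i2 [s [j1 [j2 [Ew hs]]]]]] := dec_w hm hw.
have hD := hD' i1.
have Z : forall r, size r = (m - 2)%N -> forall a b, @piFirst K g x (a :: b :: r) = 0.
  move=> r hr a b; rewrite piFirst_E HG //.
  rewrite (eq_bigr (fun a => \sum_b CM a b * (CM a b * G r))); last first.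
    by move=> a' _; apply: eq_bigr => b' _; rewrite HG.
  rewrite sum_CM2 mulrA divfK // subrr //.
subst w; rewrite -cat_cons -cat_cons piLast_E !cat_cons Z; last by rewrite size_cat hs /=; lia.
rewrite big1 ?mulr0 ?subrr // => a _; rewrite big1 // => b _.
by rewrite !cat_cons Z ?mulr0 // size_cat hs /=; lia.
Qed.

Lemma piPi_killL m x : (idx -> D != 0) -> (4 <= m)%N -> killL m x -> forall w, @piPi K g m x w = 0.
Proof.
move=> hD' hm [G HG] w; rewrite /piPi; case: eqP => // hw.
have [i1 [i2 [s [j1 [j2 [Ew hs]]]]]] := dec_w hm hw.
have hD := hD' i1.
have Z : forall a b, @piFirst K g x (i1 :: i2 :: s ++ [:: a; b]) =
    @piFirst K g G (i1 :: i2 :: s) * CM a b.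
  move=> a b; rewrite !piFirst_E -!cat_cons HG; last by rewrite /= hs; lia.
  rewrite mulrBl; congr (_ - _); rewrite -[RHS]mulrA; congr (_ * _); rewrite mulr_suml.
  apply: eq_bigr => a' _; rewrite mulr_suml; apply: eq_bigr => b' _.
  by rewrite -cat_cons -cat_cons HG ?mulrA // /= hs; lia.
subst w; rewrite -cat_cons -cat_cons piLast_E !cat_cons Z.
rewrite (eq_bigr (fun a => \sum_b CM a b * (@piFirst K g G (i1 :: i2 :: s) * CM a b))); last first.
  by move=> a _; apply: eq_bigr => b _; rewrite !cat_cons Z.
rewrite sum_CM2' mulrA divfK //; by rewrite mulrC subrr.
Qed.


Lemma rotS p (s t : seq idx) : size s = p -> rot p (s ++ t) = t ++ s.
Proof. move=> <-; apply: rot_size_cat. Qed.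

Lemma killF_of m l u p (Y : seq idx -> seq idx -> K) :
  (forall i1 i2 r v, size r = (m - 2)%N -> size v = l.*2 ->
     Xf m u (rot p ((i1 :: i2 :: r) ++ v)) = CM i1 i2 * Y r v) -> killF m (T m l u p).
Proof.
move=> E; exists (fun r => sumw (l.*2) (fun v => CW v * Y r v)) => i1 i2 r hr.
rewrite /T -sumw_mull; apply: sumw_ext => v hv; rewrite E //; ring.
Qed.

Lemma killL_of m l u p (Y : seq idx -> seq idx -> K) :
  (forall s j1 j2 v, size s = (m - 2)%N -> size v = l.*2 ->
     Xf m u (rot p ((s ++ [:: j1; j2]) ++ v)) = Y s v * CM j1 j2) -> killL m (T m l u p).
Proof.
move=> E; exists (fun s => sumw (l.*2) (fun v => CW v * Y s v)) => s j1 j2 hs.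
rewrite /T -sumw_mulr; apply: sumw_ext => v hv; rewrite E //; ring.
Qed.

Lemma KA m l u i : (i.*2.+2 <= m)%N -> (i < l)%N -> killF m (T m l u i.*2.+2).
Proof.
move=> hm hi.
apply: (@killF_of _ _ _ _ (fun r v => Uw (useq u 1 m) (drop i.*2 r ++ take i.*2.+2 v) *
   (CW (drop i.*2.+2 v) * CW (take i.*2 r)))) => i1 i2 r v hr hv.
have E1 : (i1 :: i2 :: r) ++ v = (i1 :: i2 :: take i.*2 r) ++ (drop i.*2 r ++ v).
  by rewrite -[in LHS](cat_take_drop i.*2 r) /= -catA.
have ht : size (take i.*2 r) = i.*2 by rewrite size_takel // hr; lia.
have ht2 : size (take i.*2.+2 v) = i.*2.+2 by rewrite size_takel // hv -!addnn; lia.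
rewrite E1 rotS; last by rewrite /= ht.
have E2 : (drop i.*2 r ++ v) ++ (i1 :: i2 :: take i.*2 r) =
   (drop i.*2 r ++ take i.*2.+2 v) ++ (drop i.*2.+2 v ++ i1 :: i2 :: take i.*2 r).
  by rewrite -!catA; congr (_ ++ _); rewrite catA cat_take_drop.
rewrite E2 Xf_cat; last by rewrite size_cat size_drop ht2 hr; lia.
rewrite (@Contw_cat (l - i.+1)); last by rewrite size_drop hv -!addnn; lia.
rewrite [CW (_ :: _ :: _)]/=; ring.
Qed.

Lemma KB m l u i h : m = h.*2 -> (2 <= h)%N -> (m + i.*2.+2 <= l.*2)%N -> killF m (T m l u (m + i.*2.+2)).
Proof.
move=> hm hh hl.
have hm2 : (2 <= m)%N by rewrite hm -addnn; lia.
set q := i.*2.+2.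
apply: (@killF_of _ _ _ _ (fun r v => Uw (useq u 1 m) (take m (drop q v)) *
   (CW (drop m (drop q v)) * CW (r ++ take q v)))) => i1 i2 r v hr hv.
have E1 : (i1 :: i2 :: r) ++ v = ((i1 :: i2 :: r) ++ take q v) ++ drop q v.
  by rewrite -catA cat_take_drop.
have ht : size (take q v) = q by rewrite size_takel // hv; lia.
rewrite E1 rotS; last by rewrite size_cat /= ht hr; lia.
have E2 : drop q v ++ ((i1 :: i2 :: r) ++ take q v) =
   take m (drop q v) ++ (drop m (drop q v) ++ i1 :: i2 :: (r ++ take q v)).
  by rewrite [RHS]catA cat_take_drop.
rewrite E2 Xf_cat; last by rewrite size_takel // size_drop hv; lia.
rewrite (@Contw_cat (l - i.+1 - h)); last by rewrite !size_drop hv /q hm -!addnn; lia.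
rewrite [CW (_ :: _ :: _)]/=; ring.
Qed.

Lemma KC m l u i h : m = h.*2 -> (2 <= h)%N -> (i.*2.+4 <= l.*2)%N -> (l.*2 <= m + i.*2)%N ->
  killL m (T m l u (m + i.*2.+2)).
Proof.
move=> hm hh h1 h2.
set q := i.*2.+2.
set c := (l.*2 - q)%N.
apply: (@killL_of _ _ _ _ (fun s v => Uw (useq u 1 m) (drop q v ++ take (m - c) s) *
   (CW (drop (m - c) s) * CW (take q v)))) => s j1 j2 v hs hv.
have E1 : (s ++ [:: j1; j2]) ++ v = ((s ++ [:: j1; j2]) ++ take q v) ++ drop q v.
  by rewrite -[RHS]catA cat_take_drop.
have ht : size (take q v) = q by rewrite size_takel // hv /q; lia.
have ht2 : size (take (m - c) s) = (m - c)%N by rewrite size_takel // hs /c /q; lia.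
rewrite E1 rotS; last by rewrite !size_cat /= ht hs /q; lia.
have E2 : drop q v ++ ((s ++ [:: j1; j2]) ++ take q v) =
   (drop q v ++ take (m - c) s) ++ (drop (m - c) s ++ j1 :: j2 :: take q v).
  by rewrite -!catA; congr (_ ++ _); rewrite [RHS]catA cat_take_drop.
rewrite E2 Xf_cat; last by rewrite size_cat size_drop ht2 hv /c /q; lia.
rewrite (@Contw_cat (l - i - 2)); last by rewrite size_drop hs /c /q -!addnn; lia.
rewrite [CW (_ :: _ :: _)]/=; ring.
Qed.


Lemma sum2_add (F1 F2 : idx -> idx -> K) :
  \sum_(a : idx) \sum_(b : idx) (F1 a b + F2 a b) =
  \sum_(a : idx) \sum_(b : idx) F1 a b + \sum_(a : idx) \sum_(b : idx) F2 a b.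
Proof. rewrite -big_split; apply: eq_bigr => a _; by rewrite -big_split. Qed.

Lemma piFirst_add (x y : tensor) w :
  @piFirst K g (fun z => x z + y z) w = @piFirst K g x w + @piFirst K g y w.
Proof.
case: w => [|i1 [|i2 r]] //; rewrite !piFirst_E.
rewrite (eq_bigr (fun a => \sum_b (CM a b * x (a :: b :: r) + CM a b * y (a :: b :: r)))); last first.
  by move=> a _; apply: eq_bigr => b _; rewrite mulrDr.
rewrite sum2_add; ring.
Qed.

Lemma piLast_add (x y : tensor) w :
  @piLast K g (fun z => x z + y z) w = @piLast K g x w + @piLast K g y w.
Proof.
rewrite /piLast; case: (rev w) => [|j2 [|j1 r]] //.
rewrite (eq_bigr (fun a => \sum_b (CM a b * x (rev r ++ [:: a; b]) + CM a b * y (rev r ++ [:: a; b])))); last first.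
  by move=> a _; apply: eq_bigr => b _; rewrite mulrDr.
rewrite sum2_add; ring.
Qed.

Lemma piFirst_ext n (x y : tensor) : (forall w, size w = n -> x w = y w) ->
  forall w, size w = n -> @piFirst K g x w = @piFirst K g y w.
Proof.
move=> E [|i1 [|i2 r]] hw; try by rewrite /piFirst E.
rewrite !piFirst_E E //; congr (_ - _ * _); apply: eq_bigr => a _; apply: eq_bigr => b _.
by rewrite E.
Qed.

Lemma piLast_ext n (x y : tensor) : (forall w, size w = n -> x w = y w) ->
  forall w, size w = n -> @piLast K g x w = @piLast K g y w.
Proof.
move=> E w hw; rewrite /piLast.
have hr : size (rev w) = n by rewrite size_rev.
case: (rev w) hr => [|j2 [|j1 r]] hr; rewrite ?E //.
congr (_ - _ * _); apply: eq_bigr => a _; apply: eq_bigr => b _.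
by rewrite E // size_cat size_rev /= -hr /= addn2.
Qed.

Lemma piPi_ext m (x y : tensor) : (forall w, size w = m -> x w = y w) ->
  forall w, @piPi K g m x w = @piPi K g m y w.
Proof.
move=> E w; rewrite /piPi; case: eqP => // hw.
apply: (piLast_ext (n := m)) => // z hz; exact: (piFirst_ext E).
Qed.

Lemma piPi_add m (x y : tensor) w :
  @piPi K g m (fun z => x z + y z) w = @piPi K g m x w + @piPi K g m y w.
Proof.
rewrite /piPi; case: eqP => // hw; last by rewrite addr0.
rewrite -piLast_add; apply: (piLast_ext (n := m)) => // z hz; exact: piFirst_add.
Qed.

Lemma sum_rotr_rot N (z : seq idx) (F : seq idx -> K) : size z = N ->
  \sum_(k < N) F (rotr k z) = \sum_(k < N) F (rot k z).
Proof.
move=> hz; case: N hz => [|N] hz; first by rewrite !big_ord0.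
rewrite -(big_mkord xpredT (fun k => F (rotr k z))) -(big_mkord xpredT (fun k => F (rot k z))).
rewrite big_ltn // [in RHS]big_ltn //.
rewrite /rotr hz subn0 rot0.
rewrite -[in rot N.+1 z]hz rot_size.
congr (_ + _); rewrite big_nat_rev /=; apply: eq_big_nat => k hk.
congr (F (rot _ z)); lia.
Qed.

Lemma LHS_E m l u w : size w = m ->
  @contract K g m l (@cyc K g (tmul (@vprod K g (useq u 1 m)) (@texp K g (@omega0 K g) l))) w =
  \sum_(0 <= p < m + l.*2) T m l u p w.
Proof.
move=> hw; rewrite /contract hw eqxx.
rewrite (@sumw_tuple (l.*2) (fun v => @cyc K g (tmul (@vprod K g (useq u 1 m)) (@texp K g (@omega0 K g) l)) (w ++ v) * CW v)).
rewrite /T -sumw_big; apply: sumw_ext => v hv.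
rewrite /cyc size_cat hw hv mulr_suml big_mkord (sum_rotr_rot (fun z => _ (z) * CW v)); last by rewrite size_cat hw hv.
apply: eq_bigr => k _; rewrite mulrC; congr (_ * _).
rewrite (tmul_hom _ _ (@vprod_supp _)) size_useq subn1 /= size_rot size_cat hw hv ifT; last by lia.
rewrite vprod_E texp_E size_drop size_rot size_cat hw hv.
have -> : (m + l.*2 - m = l.*2)%N by lia.
by rewrite eqxx mul1r.
Qed.


Lemma T0 m l u w : size w = m -> T m l u 0 w = D ^+ l * Uw (useq u 1 m) w.
Proof.
move=> hw; rewrite /T.
rewrite (@sumw_ext _ _ (fun v => Uw (useq u 1 m) w * (CW v * CW v))); last first.
  by move=> v _; rewrite rot0 Xf_cat //; ring.
by rewrite sumw_mull Contw_sq mulrC.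
Qed.

Lemma sum_pairs a n (F : nat -> K) :
  \sum_(a <= p < a + n.*2) F p = \sum_(i < n) (F (a + i.*2)%N + F (a + i.*2).+1).
Proof.
elim: n => [|n IH]; first by rewrite addn0 big_geq // big_ord0.
rewrite doubleS !addnS big_nat_recr; last by lia.
rewrite big_nat_recr; last by lia.
by rewrite IH big_ord_recr /= addrA.
Qed.

Lemma decomp h l' (F : nat -> K) : (1 <= h)%N ->
  \sum_(0 <= p < h.*2 + l'.+1.*2) F p =
  F 0%N + \sum_(i < h) F i.*2.+1 + \sum_(i < h) F i.*2.+2 +
  \sum_(i < l'.+1) F (h.*2 + i.*2.+1)%N + \sum_(i < l') F (h.*2 + i.*2.+2)%N.
Proof.
move=> hh.
rewrite big_ltn; last by rewrite -!addnn; lia.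
rewrite (big_cat_nat (n := h.*2.+1)); [|by []|by rewrite -!addnn; lia].
rewrite -[h.*2.+1]add1n sum_pairs big_split /=.
have -> : (h.*2 + l'.+1.*2 = (1 + h.*2 + l'.*2).+1)%N by rewrite doubleS; lia.
rewrite big_nat_recr; last by lia.
rewrite sum_pairs big_split /= [\sum_(i < l'.+1) _]big_ord_recr /=.
have S1 : \sum_(i < h) F (1 + i.*2)%N = \sum_(i < h) F i.*2.+1 by apply: eq_bigr => i _; rewrite add1n.
have S2 : \sum_(i < h) F (1 + i.*2).+1 = \sum_(i < h) F i.*2.+2 by apply: eq_bigr => i _; rewrite add1n.
have S3 : \sum_(i < l') F (1 + h.*2 + i.*2)%N = \sum_(i < l') F (h.*2 + i.*2.+1)%N.
  by apply: eq_bigr => i _; congr F; lia.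
have S4 : \sum_(i < l') F (1 + h.*2 + i.*2).+1 = \sum_(i < l') F (h.*2 + i.*2.+2)%N.
  by apply: eq_bigr => i _; congr F; lia.
rewrite S1 S2 S3 S4.
rewrite (_ : (1 + h.*2 + l'.*2 = h.*2 + l'.*2.+1)%N); last by lia.
ring.
Qed.

Lemma odd_sum h (G : nat -> K) :
  \sum_(1 <= k < h.*2 | odd k) G k = \sum_(i < h) G i.*2.+1.
Proof.
rewrite big_mkcond.
case: h => [|h]; first by rewrite big_geq // big_ord0.
rewrite (_ : \sum_(1 <= k < h.+1.*2) _ = \sum_(0 <= k < h.+1.*2) (if odd k then G k else 0)); last first.
  by rewrite [RHS]big_ltn ?add0r // doubleS.
elim: h.+1 => [|n IH]; first by rewrite big_geq // big_ord0.
rewrite doubleS big_nat_recr // big_nat_recr // IH big_ord_recr /= odd_double /= addr0.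
by [].
Qed.


Lemma sum_split_pred n (P : pred nat) (F : nat -> K) :
  \sum_(0 <= i < n) F i = \sum_(0 <= i < n | P i) F i + \sum_(0 <= i < n | ~~ P i) F i.
Proof. by rewrite (bigID P). Qed.

Definition Rinner m l u : tensor :=
  @tadd K g (@tscale K g (D ^+ l) (@vprod K g (useq u 1 m)))
       (@tadd K g (@tscale K g ((l%:R - (m./2)%:R) * (-1) ^+ l) (@Phi1 K g m u))
             (@tscale K g ((-1) ^+ l) (@Phi2 K g m u))).

Definition KF m l h u : tensor := fun w =>
  \sum_(i < h) T m l u i.*2.+2 w + \sum_(0 <= i < l.-1 | (i < l - h)%N) T m l u (m + i.*2.+2) w.
Definition KL m l h u : tensor := fun w =>
  \sum_(0 <= i < l.-1 | ~~ (i < l - h)%N) T m l u (m + i.*2.+2) w.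

Lemma main_inner h l' u w : (2 <= h)%N -> (h <= l'.+1)%N -> size w = h.*2 ->
  @contract K g (h.*2) (l'.+1) (@cyc K g (tmul (@vprod K g (useq u 1 (h.*2))) (@texp K g (@omega0 K g) l'.+1))) w =
  Rinner (h.*2) l'.+1 u w + (KF (h.*2) l'.+1 h u w + KL (h.*2) l'.+1 h u w).
Proof.
move=> hh hl hw.
set l := l'.+1.
set m := h.*2.
rewrite LHS_E // /m decomp; last by lia.
rewrite T0 //.
set cA := fun i : nat => @Cont K g (useq u (m - i.*2.+1 + 1) (m - 1)).
set fA := fun i : nat => tmul (@vtens K g (u m)) (tmul (@texp K g (@omega0 K g) i) (@vprod K g (useq u 1 (m - i.*2.+1)))) w.
set cB := fun i : nat => @Cont K g (useq u 2 i.*2.+1).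
set fB := fun i : nat => tmul (@vprod K g (useq u i.*2.+2 m)) (tmul (@texp K g (@omega0 K g) i) (@vtens K g (u 1%N))) w.
have SA : \sum_(i < h) T m l u i.*2.+1 w = \sum_(i < h) (-1) ^+ l * (-1) ^+ i * cA i * fA i.
  apply: eq_bigr => i _; rewrite TAl //; rewrite /m -?addnn; have := ltn_ord i; lia.
have SB : \sum_(i < l) T m l u (m + i.*2.+1) w =
    (l - h)%:R * ((-1) ^+ l * (-1) ^+ (h - 1) * @Cont K g (useq u 2 (m - 1)) *
       tmul (@vtens K g (u m)) (tmul (@texp K g (@omega0 K g) (h - 1)) (@vtens K g (u 1%N))) w) +
    \sum_(i < h) (-1) ^+ l * (-1) ^+ i * cB i * fB i.
  rewrite -(big_mkord xpredT (fun i => T m l u (m + i.*2.+1) w)).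
  rewrite (big_cat_nat (n := l - h)) //=; last by lia.
  congr (_ + _).
    set c1 := _ * tmul _ _ w.
    have -> : \sum_(0 <= i < l - h) T m l u (m + i.*2.+1) w = \sum_(0 <= i < l - h) c1.
      apply: eq_big_nat => i hi; rewrite (@TPhi m l u i w h) //; lia.
    by rewrite sumr_const_nat subn0 mulr_natl.
  rewrite -{1}(add0n (l - h)%N) big_addn (_ : (l - (l - h) = h)%N); last by lia.
  rewrite big_nat_rev /= -(big_mkord xpredT (fun i => (-1) ^+ l * (-1) ^+ i * cB i * fB i)).
  apply: eq_big_nat => i hi.
  rewrite -TBe //; try lia.
  congr T; rewrite /m -!addnn; lia.
have P2 : (-1) ^+ l * @Phi2 K g m u w =
    \sum_(i < h) (-1) ^+ l * (-1) ^+ i * cA i * fA i + \sum_(i < h) (-1) ^+ l * (-1) ^+ i * cB i * fB i.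
  rewrite /Phi2 /m odd_sum mulr_sumr -big_split; apply: eq_bigr => i _ /=.
  rewrite half_double /cA /fA /cB /fB; ring.
rewrite SA SB.
rewrite /Rinner /tadd /tscale /Phi1 /tscale vprod_E.
rewrite (_ : (m./2 = h)%N); last by rewrite /m half_double.
rewrite P2 /KF /KL.
rewrite (_ : l.-1 = l'); last by [].
rewrite -(big_mkord xpredT (fun i => T h.*2 l u (h.*2 + i.*2.+2) w)) (sum_split_pred _ (fun i => (i < l - h)%N)) /m.
rewrite -natrB; last by lia.
ring.
Qed.


Lemma KF_kill h l' u : (2 <= h)%N -> (h <= l'.+1)%N -> killF (h.*2) (KF (h.*2) l'.+1 h u).
Proof.
move=> hh hl; rewrite /KF; apply: killF_add.
  apply: killF_sum => i _ _; apply: KA; have := ltn_ord i; rewrite -?addnn; lia.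
apply: killF_sum => i hi Pi; apply: (@KB _ _ _ _ h) => //; rewrite -!addnn; lia.
Qed.

Lemma KL_kill h l' u : (2 <= h)%N -> (h <= l'.+1)%N -> killL (h.*2) (KL (h.*2) l'.+1 h u).
Proof.
move=> hh hl; rewrite /KL; apply: killL_sum => i hi Pi.
move: hi; rewrite mem_index_iota /= => hi.
apply: (@KC _ _ _ _ h) => //; rewrite -!addnn; lia.
Qed.

Lemma final h l' u (hK : [pchar K] =i pred0) : (2 <= h)%N -> (h <= l'.+1)%N ->
  @lhs54 K g (h.*2) l'.+1 u = @rhs54 K g (h.*2) l'.+1 u.
Proof.
move=> hh hl.
have hD : idx -> D != 0.
  move=> i; rewrite ((pcharf0P K).1 hK) -lt0n; exact: leq_ltn_trans (leq0n i) (ltn_ord i).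
have hm4 : (4 <= h.*2)%N by rewrite -addnn; lia.
apply: functional_extensionality => w.
rewrite /lhs54 /rhs54.
rewrite (@piPi_ext _ _ (fun w => Rinner (h.*2) l'.+1 u w + (KF (h.*2) l'.+1 h u w + KL (h.*2) l'.+1 h u w))); last first.
  by move=> z hz; apply: main_inner.
rewrite piPi_add piPi_add (piPi_killF hD hm4 (KF_kill u hh hl)) (piPi_killL hD hm4 (KL_kill u hh hl)).
by rewrite !addr0.
Qed.

End Work.

Theorem lemma5p4 (K : fieldType) (hK : [pchar K] =i pred0) (g : nat)
  (m l : nat) (hm4 : (4 <= m)%N) (hmeven : ~~ odd m) (hl : (m./2 <= l)%N)
  (u : nat -> Vec K g) :
  lhs54 m l u = rhs54 m l u.
Proof.
have hm : m = (m./2).*2 by rewrite -{1}(odd_double_half m) (negbTE hmeven) add0n.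
have h2 : (2 <= m./2)%N by move: hm4; rewrite {1}hm -addnn; lia.
case: l hl => [|l'] hl; first by lia.
rewrite hm; apply: final => //.
Qed.
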